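(* Let $\Omega$ be a finite sample space and let $P\neq Q$ be two probability distributions on $\Omega$. For every $\lambda\in(0,1)$, $$L(\lambda)\,H^2(P,Q)\le \mathrm{GJS}_\lambda(P\parallel Q)\le U(\lambda)\,H^2(P,Q)\le H^2(P,Q).$$ In particular, for $\lambda=1/2$, $\ln 2\le \mathrm{JS}(P\parallel Q)/H^2(P,Q)\le 1$.
   Context: $\mathrm{KL}(P\parallel Q)=\sum_{i:P(i)>0}P(i)\ln\frac{P(i)}{Q(i)}$. For $\lambda\in[0,1]$ and $M_\lambda=\lambda P+(1-\lambda)Q$, $\mathrm{GJS}_\lambda(P\parallel Q)=\lambda\,\mathrm{KL}(P\parallel M_\lambda)+(1-\lambda)\,\mathrm{KL}(Q\parallel M_\lambda)$, and $\mathrm{JS}=\mathrm{GJS}_{1/2}$. The squared Hellinger distance is $H^2(P,Q)=\frac12\sum_{i\in\Omega}(\sqrt{P(i)}-\sqrt{Q(i)})^2$. With $\eta(\lambda)=-\lambda\ln\lambda$, $L(\lambda)=2\min\{\eta(\lambda),\eta(1-\lambda)\}$ and $U(\lambda)=\frac{2\lambda(1-\lambda)}{1-2\lambda}\ln\frac{1-\lambda}{\lambda}$ for $\lambda\neq1/2$, $U(1/2)=1$. *)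

(* Defs.v *)
From Stdlib Require Import Reals Lra List.
Import ListNotations.
Open Scope R_scope.

(* Finite sample space Omega = {0, ..., n-1}; distributions are functions nat -> R
   of which only the values on indices i < n matter. *)
Definition sumR (n : nat) (f : nat -> R) : R :=
  fold_right Rplus 0 (map f (seq 0 n)).

Definition is_distribution (n : nat) (P : nat -> R) : Prop :=
  (forall i, (i < n)%nat -> 0 <= P i) /\ sumR n P = 1.

Definition KL (n : nat) (P Q : nat -> R) : R :=
  sumR n (fun i => if Rlt_dec 0 (P i) then P i * ln (P i / Q i) else 0).

Definition mixture (lam : R) (P Q : nat -> R) : nat -> R :=
  fun i => lam * P i + (1 - lam) * Q i.

Definition GJS (n : nat) (lam : R) (P Q : nat -> R) : R :=
  lam * KL n P (mixture lam P Q) + (1 - lam) * KL n Q (mixture lam P Q).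

Definition JS (n : nat) (P Q : nat -> R) : R := GJS n (1/2) P Q.

Definition Hellinger2 (n : nat) (P Q : nat -> R) : R :=
  (1/2) * sumR n (fun i => (sqrt (P i) - sqrt (Q i)) ^ 2).

Definition eta (lam : R) : R := - lam * ln lam.

Definition Lb (lam : R) : R := 2 * Rmin (eta lam) (eta (1 - lam)).

Definition Ub (lam : R) : R :=
  if Req_EM_T lam (1/2) then 1
  else (2 * lam * (1 - lam)) / (1 - 2 * lam) * ln ((1 - lam) / lam).

(* Main.v *)
Require Import Defs.
From Stdlib Require Import Reals Lra Psatz List Lia.
From Coquelicot Require Import Coquelicot.
Open Scope R_scope.

Lemma ln_le u : 0 < u -> ln u <= u - 1.
Proof. intro H. generalize (exp_ineq1_le (ln u)). rewrite exp_ln; lra. Qed.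

Lemma ln_ge u : 0 < u -> 1 - / u <= ln u.
Proof. intro H. generalize (ln_le (/u) (Rinv_0_lt_compat _ H)). rewrite ln_Rinv; lra. Qed.

Lemma mono_up f f' a b : a <= b ->
  (forall c, a <= c <= b -> derivable_pt_lim f c (f' c)) ->
  (forall c, a < c < b -> 0 <= f' c) -> f a <= f b.
Proof.
  intros Hab Hd Hp. destruct (Req_dec a b) as [->|Hne]; [lra|].
  destruct (MVT_cor2 f f' a b) as [c [Hc1 Hc2]]; [lra|exact Hd|].
  specialize (Hp c Hc2). nra.
Qed.

Definition Nf l t := 2*l*t^2*ln t - (l*t^2+1-l)*ln(l*t^2+1-l).

Lemma Nf_der l t : 0 < l < 1 -> 0 < t ->
  derivable_pt_lim (Nf l) t (4*l*t*ln t - 2*l*t*ln(l*t^2+1-l)).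
Proof.
  intros Hl Ht. apply is_derive_Reals. unfold Nf. auto_derive.
  - repeat split; try lra. nra.
  - assert (0 < l*t^2+1-l) by nra.
    replace (l * (t * (t * 1)) + 1 + - l) with (l*t^2+1-l) by ring. field. lra.
Qed.

Lemma Lb_le_eta l : Lb l <= 2 * eta l.
Proof. unfold Lb. generalize (Rmin_l (eta l) (eta (1-l))). lra. Qed.
Lemma Lb_le_eta' l : Lb l <= 2 * eta (1-l).
Proof. unfold Lb. generalize (Rmin_r (eta l) (eta (1-l))). lra. Qed.

Lemma eta_le l : 0 < l < 1 -> eta l <= 1 - l.
Proof. intros H. unfold eta. generalize (ln_ge l (proj1 H)).
  intro H1. assert (l * (1 - /l) = l - 1) by (field; lra). nra. Qed.

Lemma Lb_le_4 l : 0 < l < 1 -> Lb l <= 4*l*(1-l).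
Proof. intros H. destruct (Rle_dec l (1/2)).
  - generalize (Lb_le_eta' l) (eta_le (1-l) ltac:(lra)). nra.
  - generalize (Lb_le_eta l) (eta_le l H). nra.
Qed.

Lemma ddEL_pos l t : 0 < l < 1 -> 1 <= t ->
  0 <= 4*l*ln t + 4*l - 2*l*ln(l*t^2+1-l) - 4*l^2*t^2/(l*t^2+1-l) - Lb l.
Proof.
  intros Hl Ht. set (m := l*t^2+1-l). assert (Hm : 0 < m) by (unfold m; nra).
  set (w := t^2/m).
  assert (Htw : t^2 = w*m) by (unfold w; field; lra).
  assert (Ht2 : 1 <= t^2) by nra.
  assert (Hmt : m <= t^2). { unfold m. assert (0 <= (1-l)*(t^2-1)) by (apply Rmult_le_pos; lra). lra. }
  assert (Hmt2 : l*t^2 <= m) by (unfold m; lra).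
  assert (Hw1 : 1 <= w) by nra.
  assert (Hw2 : l * w <= 1) by nra.
  assert (Hlnw : ln w = 2 * ln t - ln m).
  { unfold w. rewrite ln_div; try nra. replace (t^2) with (t*t) by ring. rewrite ln_mult; lra. }
  assert (E : 4*l*ln t + 4*l - 2*l*ln m - 4*l^2*t^2/m = 2*l*(ln w + 2 - 2*l*w)).
  { rewrite Hlnw. unfold w. field. lra. }
  fold m. rewrite E.
  destruct (Rle_dec (2*l*w) 1).
  - generalize (ln_ge w ltac:(lra)). intro H1.
    assert (Hiw : w * / w = 1) by (field; lra).
    assert (0 <= (w-1)*(/w - 2*l)).
    { apply Rmult_le_pos; try lra. assert (/w * (2*l*w) <= /w * 1).
      { apply Rmult_le_compat_l; try lra. left; apply Rinv_0_lt_compat; lra. }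
      nra. }
    generalize (Lb_le_4 l Hl). nra.
  - assert (Hu : 0 < l * w) by nra.
    assert (Hlnu : ln (l*w) = ln l + ln w) by (rewrite ln_mult; lra).
    generalize (ln_ge (l*w) Hu). intro H1.
    assert (Hiw : (l*w) * / (l*w) = 1) by (field; lra).
    assert (0 <= (l*w-1)*(/(l*w) - 2)).
    { replace ((l*w-1)*(/(l*w) - 2)) with ((1-l*w)*(2-/(l*w))) by ring. apply Rmult_le_pos ; try lra. assert (/(l*w) * (2*(l*w)) >= /(l*w) * 1).
      { apply Rle_ge, Rmult_le_compat_l; try lra. left; apply Rinv_0_lt_compat; lra. }
      nra. }
    generalize (Lb_le_eta l). unfold eta. nra.
Qed.

Lemma lower_core l r : 0 < l < 1 -> 1 <= r -> Lb l * ((r-1)^2/2) <= Nf l r.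
Proof.
  intros Hl Hr.
  set (dEL := fun t => 4*l*t*ln t - 2*l*t*ln(l*t^2+1-l) - Lb l * (t-1)).
  assert (HdEL : forall t, 1 <= t -> 0 <= dEL t).
  { intros t Ht.
    replace 0 with (dEL 1) by (unfold dEL; cbv beta; rewrite ln_1; replace (l*1^2+1-l) with 1 by ring; rewrite ln_1; ring).
    apply (mono_up dEL (fun t => 4*l*ln t + 4*l - 2*l*ln(l*t^2+1-l) - 4*l^2*t^2/(l*t^2+1-l) - Lb l)); auto.
    - intros c Hc. apply is_derive_Reals. unfold dEL. auto_derive.
      + repeat split; try lra. nra.
      + assert (0 < l*c^2+1-l) by nra.
        replace (l * (c * (c * 1)) + 1 + - l) with (l*c^2+1-l) by ring. field. lra.
    - intros c Hc. apply ddEL_pos; lra. }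
  set (EL := fun t => Nf l t - Lb l * ((t-1)^2/2)).
  enough (0 <= EL r) by (unfold EL in *; lra).
  replace 0 with (EL 1) by (unfold EL, Nf; cbv beta; replace (l*1^2+1-l) with 1 by ring; rewrite ln_1; field).
  apply (mono_up EL dEL); auto.
  - intros c Hc. unfold EL, dEL.
    replace (4 * l * c * ln c - 2 * l * c * ln (l * c ^ 2 + 1 - l) - Lb l * (c - 1))
      with ((4 * l * c * ln c - 2 * l * c * ln (l * c ^ 2 + 1 - l)) - Lb l * (2*(c-1)/2)) by field.
    apply derivable_pt_lim_minus. apply Nf_der; lra.
    apply derivable_pt_lim_scal. apply is_derive_Reals. auto_derive; auto. field.
  - intros c Hc. apply HdEL; lra.
Qed.

Lemma A1 x : 1 <= x -> 2*(x-1)/(x+1) <= ln x.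
Proof.
  intro Hx. set (f := fun x => ln x - 2*(x-1)/(x+1)).
  enough (f 1 <= f x) by (unfold f in *; rewrite ln_1 in *; lra).
  apply (mono_up f (fun x => /x - 4/(x+1)^2)); auto.
  - intros c Hc. apply is_derive_Reals. unfold f. auto_derive.
    + repeat split; lra.
    + field. lra.
  - intros c Hc. replace (/c - 4/(c+1)^2) with ((c-1)^2/(c*(c+1)^2)) by (field; lra).
    apply Rdiv_le_0_compat. nra. nra.
Qed.

Lemma A2 x : 1 <= x -> ln x <= (x - /x)/2.
Proof.
  intro Hx. set (f := fun x => (x - /x)/2 - ln x).
  enough (f 1 <= f x) by (unfold f in *; rewrite ln_1 in *; replace ((1 - /1)/2) with 0 in * by field; lra).
  apply (mono_up f (fun x => (1 + /x^2)/2 - /x)); auto.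
  - intros c Hc. apply is_derive_Reals. unfold f. auto_derive.
    + repeat split; lra.
    + field. lra.
  - intros c Hc. replace ((1 + /c^2)/2 - /c) with ((c-1)^2/(2*c^2)) by (field; lra).
    apply Rdiv_le_0_compat. nra. nra.
Qed.

Lemma A3 x : 1 <= x -> (x-1) * ln (1+x) <= x * ln x.
Proof.
  intro Hx. set (f := fun x => x * ln x - (x-1) * ln (1+x)).
  enough (f 1 <= f x) by (unfold f in *; rewrite ln_1 in *; lra).
  apply (mono_up f (fun x => ln x + 1 - ln (1+x) - (x-1)/(1+x))); auto.
  - intros c Hc. apply is_derive_Reals. unfold f. auto_derive.
    + repeat split; lra.
    + field. lra.
  - intros c Hc. generalize (ln_ge (c/(1+c)) ltac:(apply Rdiv_lt_0_compat; lra)).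
    rewrite ln_div by lra. replace (/ (c/(1+c))) with ((1+c)/c) by (field; lra).
    intro H. assert (0 <= (c-1)/(c*(1+c))) by (apply Rdiv_le_0_compat; nra).
    assert (1 - (1+c)/c + 1 - (c-1)/(1+c) = (c-1)/(c*(1+c))) by (field; lra).
    lra.
Qed.

Lemma Ufacts l : 0 < l <= 1/2 ->
  Ub l * (1 - 2*l) = 2*l*(1-l)*ln((1-l)/l) /\
  4*l*(1-l) <= Ub l /\ Ub l <= 1 /\ 2 * eta l <= Ub l /\ 2 * eta (1-l) <= Ub l.
Proof.
  intros Hl. unfold Ub. destruct (Req_EM_T l (1/2)) as [E|NE].
  - subst l. replace ((1 - 1/2)/(1/2)) with 1 by field. rewrite ln_1.
    generalize (eta_le (1/2) ltac:(lra)). replace (1 - 1/2) with (1/2) by field. intros.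
    repeat split; lra.
  - assert (Hl2 : l < 1/2) by lra.
    set (rho := (1-l)/l).
    assert (Hr : 1 <= rho) by (unfold rho; apply Rcomplements.Rle_div_r; lra).
    set (U := 2*l*(1-l)/(1-2*l)*ln rho).
    assert (K : U * (1-2*l) = 2*l*(1-l)*ln rho) by (unfold U; field; lra).
    assert (F1 : 4*l*(1-l) <= U).
    { generalize (A1 rho Hr). replace (2*(rho-1)/(rho+1)) with (2*(1-2*l)) by (unfold rho; field; lra).
      intro H. assert (0 < 2*l*(1-l)) by nra. nra. }
    split; [exact K|]. split; [exact F1|]. split.
    { generalize (A2 rho Hr). replace ((rho - /rho)/2) with ((1-2*l)/(2*l*(1-l))) by (unfold rho; field; lra).
      intro H. assert (0 < 2*l*(1-l)) by nra.
      assert (2*l*(1-l) * ((1-2*l)/(2*l*(1-l))) = 1 - 2*l) by (field; lra). nra. }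
    split.
    { generalize (A3 rho Hr). replace (1+rho) with (/l) by (unfold rho; field; lra).
      rewrite ln_Rinv by lra. replace (rho - 1) with ((1-2*l)/l) by (unfold rho; field; lra).
      intro H. unfold eta.
      assert (H2 : l * ((1-2*l)/l * - ln l) <= l * (rho * ln rho)) by (apply Rmult_le_compat_l; lra).
      replace (l * ((1-2*l)/l * - ln l)) with (-(1-2*l)*ln l) in H2 by (field; lra).
      replace (l * (rho * ln rho)) with ((1-l) * ln rho) in H2 by (unfold rho; field; lra).
      nra. }
    { generalize (eta_le (1-l) ltac:(lra)). nra. }
Qed.

Lemma mono_down f f' a b : a <= b ->
  (forall c, a <= c <= b -> derivable_pt_lim f c (f' c)) ->
  (forall c, a < c < b -> f' c <= 0) -> f b <= f a.
Proof.
  intros Hab Hd Hp. destruct (Req_dec a b) as [->|Hne]; [lra|].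
  destruct (MVT_cor2 f f' a b) as [c [Hc1 Hc2]]; [lra|exact Hd|].
  specialize (Hp c Hc2). nra.
Qed.

Section Up.
Variable l U : R.
Hypothesis Hl : 0 < l <= 1/2.
Hypothesis K : U * (1 - 2*l) = 2*l*(1-l)*ln((1-l)/l).
Hypothesis F1 : 4*l*(1-l) <= U.

Let m t := l*t^2+1-l.
Let E t := U*((t-1)^2/2) - Nf l t.
Let dE t := U*(t-1) - (4*l*t*ln t - 2*l*t*ln (m t)).
Let phi t := U*(1 - /t) - 4*l*ln t + 2*l*ln (m t).
Let dphi t := U/t^2 - 4*l/t + 4*l^2*t/(m t).
Let q t := U*l*t^2 - 4*l*(1-l)*t + U*(1-l).

Lemma m_pos t : 0 < m t.
Proof. unfold m. nra. Qed.

Lemma E_der t : 0 < t -> derivable_pt_lim E t (dE t).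
Proof.
  intro Ht. unfold E, dE. fold (m t).
  replace (U * (t - 1) - (4 * l * t * ln t - 2 * l * t * ln (m t)))
    with (U * (2*(t-1)/2) - (4 * l * t * ln t - 2 * l * t * ln (l*t^2+1-l))) by (unfold m; field).
  apply derivable_pt_lim_minus. apply derivable_pt_lim_scal.
  apply is_derive_Reals. auto_derive; auto. field.
  apply Nf_der; lra.
Qed.

Lemma phi_der t : 0 < t -> derivable_pt_lim phi t (dphi t).
Proof.
  intro Ht. generalize (m_pos t). unfold phi, dphi, m. intro Hm.
  apply is_derive_Reals. auto_derive.
  - repeat split; lra.
  - replace (l * (t * (t * 1)) + 1 + - l) with (l*t^2+1-l) by ring. field. lra.
Qed.

Lemma dE_phi t : 0 < t -> dE t = t * phi t.
Proof. intro Ht. unfold dE, phi. field. lra. Qed.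

Lemma q_dphi t : 0 < t -> q t = dphi t * (t^2 * m t).
Proof. intro Ht. generalize (m_pos t). unfold q, dphi, m. intro Hm. field. lra. Qed.

Lemma E1 : E 1 = 0.
Proof. unfold E, Nf. replace (l*1^2+1-l) with 1 by ring. rewrite ln_1. field. Qed.
Lemma phi1 : phi 1 = 0.
Proof. unfold phi, m. replace (l*1^2+1-l) with 1 by ring. rewrite ln_1. field. Qed.

Let r0 := (1-l)/l.
Lemma m_r0 : m r0 = r0.
Proof. unfold m, r0. field. lra. Qed.
Lemma r0_ge1 : 1 <= r0.
Proof. unfold r0. apply Rcomplements.Rle_div_r; lra. Qed.

Lemma phi_r0 : phi r0 = 0.
Proof.
  unfold phi. rewrite m_r0.
  replace (U * (1 - / r0)) with (U*(1-2*l)/(1-l)) by (unfold r0; field; lra).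
  rewrite K. fold r0. field. lra.
Qed.

Lemma E_r0 : E r0 = 0.
Proof.
  unfold E, Nf. fold (m r0). rewrite m_r0.
  replace (U * ((r0 - 1) ^ 2 / 2)) with (U*(1-2*l) * ((1-2*l)/(2*l^2))) by (unfold r0; field; lra).
  rewrite K. fold r0. unfold r0. field. lra.
Qed.

Lemma q_pos_le1 t : 0 < t <= 1 -> 0 <= q t.
Proof.
  intro Ht. unfold q.
  assert (0 <= U*((1-t)*((1-l) - l*t))).
  { apply Rmult_le_pos. nra. apply Rmult_le_pos; nra. }
  nra.
Qed.

Lemma q_pos_ger0 t : r0 <= t -> 0 <= q t.
Proof.
  intro Ht. generalize r0_ge1. intro H1.
  assert (Hlr : l * r0 = 1 - l) by (unfold r0; field; lra).
  assert (HU2 : 2*l <= U) by nra.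
  assert (Hq0 : q r0 = (1-l)*(U/l - 4*(1-l))) by (unfold q, r0; field; lra).
  assert (Hq0p : 0 <= q r0).
  { rewrite Hq0. apply Rmult_le_pos; [lra|].
    assert (U/l = U * /l) by (unfold Rdiv; ring).
    assert (4*(1-l) <= U * / l).
    { apply (Rmult_le_reg_l l); [lra|]. replace (l*(U*/l)) with U by (field; lra). nra. }
    lra. }
  assert (q t - q r0 = (t-r0)*(U*l*(t+r0) - 4*l*(1-l))) by (unfold q; ring).
  assert (0 <= (t-r0)*(U*l*(t+r0) - 4*l*(1-l))).
  { apply Rmult_le_pos; [lra|].
    assert (0 <= U*l*(t-r0)) by (apply Rmult_le_pos; [nra|lra]).
    assert (U*l*(t+r0) = U*l*(t-r0) + 2*U*(l*r0)) by ring.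
    rewrite Hlr in *. nra. }
  lra.
Qed.

Lemma upper_core r : 0 < r -> Nf l r <= U*((r-1)^2/2).
Proof.
  intro Hr. enough (0 <= E r) by (unfold E in *; lra).
  generalize r0_ge1; intro Hr0.
  destruct (Rle_dec r 1) as [Hr1|Hr1].
  - rewrite <- E1. apply (mono_down E dE r 1); auto.
    + intros c Hc. apply E_der; lra.
    + intros c Hc. rewrite dE_phi by lra.
      assert (phi c <= phi 1).
      { apply (mono_up phi dphi); try lra.
        - intros d Hd. apply phi_der; lra.
        - intros d Hd. generalize (q_pos_le1 d ltac:(lra)). rewrite q_dphi by lra.
          generalize (m_pos d). intros Hm Hq.
          assert (0 < d^2 * m d) by (apply Rmult_lt_0_compat; nra).
          nra. }
      rewrite phi1 in H. nra.
  - destruct (Rle_dec r0 r) as [Hr2|Hr2].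
    + rewrite <- E_r0. apply (mono_up E dE r0 r); auto.
      * intros c Hc. apply E_der; lra.
      * intros c Hc. rewrite dE_phi by lra.
        assert (phi r0 <= phi c).
        { apply (mono_up phi dphi); try lra.
          - intros d Hd. apply phi_der; lra.
          - intros d Hd. generalize (q_pos_ger0 d ltac:(lra)). rewrite q_dphi by lra.
            generalize (m_pos d). intros Hm Hq.
            assert (0 < d^2 * m d) by (apply Rmult_lt_0_compat; nra).
            nra. }
        rewrite phi_r0 in H. nra.
    +
      destruct (Rle_dec 0 (E r)) as [|HE]; [assumption|exfalso].
      assert (dsgn : forall d, 0 < d -> dphi d < 0 -> q d < 0).
      { intros d Hd Hdd. rewrite q_dphi by lra. generalize (m_pos d). intro Hm.
        assert (0 < d^2 * m d) by (apply Rmult_lt_0_compat; nra). nra. }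
      assert (dsgn2 : forall d, 0 < d -> dphi d > 0 -> q d > 0).
      { intros d Hd Hdd. rewrite q_dphi by lra. generalize (m_pos d). intro Hm.
        assert (0 < d^2 * m d) by (apply Rmult_lt_0_compat; nra). nra. }
      destruct (MVT_cor2 E dE 1 r) as [x1 [Ex1 Hx1]]; [lra| intros; apply E_der; lra |].
      destruct (MVT_cor2 E dE r r0) as [x2 [Ex2 Hx2]]; [lra| intros; apply E_der; lra |].
      rewrite E1 in Ex1. rewrite E_r0 in Ex2.
      rewrite dE_phi in Ex1, Ex2 by lra.
      assert (P1 : phi x1 < 0).
      { destruct (Rlt_dec (phi x1) 0) as [|h]; [auto|exfalso].
        assert (0 <= x1 * phi x1 * (r-1)) by (apply Rmult_le_pos; [apply Rmult_le_pos|]; lra). lra. }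
      assert (P2 : phi x2 > 0).
      { destruct (Rlt_dec 0 (phi x2)) as [|h]; [auto|exfalso].
        assert (x2 * phi x2 * (r0-r) <= 0).
        { replace (x2 * phi x2 * (r0-r)) with (- (x2 * (- phi x2) * (r0-r))) by ring.
          assert (0 <= x2 * (- phi x2) * (r0-r)) by (apply Rmult_le_pos; [apply Rmult_le_pos|]; lra). lra. }
        lra. }
      destruct (MVT_cor2 phi dphi 1 x1) as [p1 [Ep1 Hp1]]; [lra| intros; apply phi_der; lra |].
      destruct (MVT_cor2 phi dphi x1 x2) as [p2 [Ep2 Hp2]]; [lra| intros; apply phi_der; lra |].
      destruct (MVT_cor2 phi dphi x2 r0) as [p3 [Ep3 Hp3]]; [lra| intros; apply phi_der; lra |].
      rewrite phi1 in Ep1. rewrite phi_r0 in Ep3.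
      assert (Q1 : q p1 < 0) by (apply dsgn; nra).
      assert (Q2 : q p2 > 0) by (apply dsgn2; nra).
      assert (Q3 : q p3 < 0) by (apply dsgn; nra).
      assert (Id : q p2 * (p3 - p1) = (p3-p2)*q p1 + (p2-p1)*q p3 - U*l*(p2-p1)*(p3-p2)*(p3-p1))
        by (unfold q; ring).
      assert (0 < U*l) by nra.
      assert (0 < (p2-p1)*(p3-p2)*(p3-p1)) by (apply Rmult_lt_0_compat; [apply Rmult_lt_0_compat|]; lra).
      assert (0 < q p2 * (p3 - p1)) by (apply Rmult_lt_0_compat; lra).
      assert ((p3-p2)*q p1 < 0) by (apply Rmult_pos_neg; lra).
      assert ((p2-p1)*q p3 < 0) by (apply Rmult_pos_neg; lra).
      nra.
Qed.
End Up.

Definition Gp l x y := l*(if Rlt_dec 0 x then x*ln(x/(l*x+(1-l)*y)) else 0)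
  + (1-l)*(if Rlt_dec 0 y then y*ln(y/(l*x+(1-l)*y)) else 0).
Definition hh x y := (sqrt x - sqrt y)^2.

Lemma Gp_sym l x y : Gp l x y = Gp (1-l) y x.
Proof.
  unfold Gp. replace ((1-l)*y + (1-(1-l))*x) with (l*x+(1-l)*y) by ring.
  replace (1-(1-l)) with l by ring. ring.
Qed.

Lemma hh_sym x y : hh x y = hh y x.
Proof. unfold hh. ring. Qed.

Lemma Lb_sym l : Lb (1-l) = Lb l.
Proof. unfold Lb. replace (1-(1-l)) with l by ring. rewrite Rmin_comm. ring. Qed.

Lemma Ub_sym l : 0 < l < 1 -> Ub (1-l) = Ub l.
Proof.
  intro Hl. unfold Ub.
  destruct (Req_EM_T (1-l) (1/2)); destruct (Req_EM_T l (1/2)); try lra.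
  replace (1-(1-l)) with l by ring.
  replace (l/(1-l)) with (/((1-l)/l)) by (field; lra).
  rewrite ln_Rinv by (apply Rdiv_lt_0_compat; lra).
  field. lra.
Qed.

Lemma Gp_y0 l x : 0 < l < 1 -> 0 <= x -> Gp l x 0 = eta l * x.
Proof.
  intros Hl Hx. unfold Gp, eta. destruct (Rlt_dec 0 0); [lra|].
  destruct (Rlt_dec 0 x).
  - replace (x/(l*x+(1-l)*0)) with (/l) by (field; lra). rewrite ln_Rinv by lra. ring.
  - assert (x = 0) by lra. subst. ring.
Qed.

Lemma hh_y0 x : 0 <= x -> hh x 0 = x.
Proof. intro H. unfold hh. rewrite sqrt_0. replace ((sqrt x - 0)^2) with (sqrt x * sqrt x) by ring. apply sqrt_sqrt; auto. Qed.

Lemma Gp_pos l x y : 0 < l < 1 -> 0 < x -> 0 < y ->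
  Gp l x y = y * Nf l (sqrt x / sqrt y) /\ hh x y = y * (sqrt x / sqrt y - 1)^2.
Proof.
  intros Hl Hx Hy. unfold Gp, hh, Nf.
  destruct (Rlt_dec 0 x) as [_|]; [|lra]. destruct (Rlt_dec 0 y) as [_|]; [|lra].
  assert (Ha : 0 < sqrt x) by (apply sqrt_lt_R0; auto).
  assert (Hb : 0 < sqrt y) by (apply sqrt_lt_R0; auto).
  assert (Ex : x = sqrt x * sqrt x) by (rewrite sqrt_sqrt; lra).
  assert (Ey : y = sqrt y * sqrt y) by (rewrite sqrt_sqrt; lra).
  set (a := sqrt x) in *. set (b := sqrt y) in *. set (r := a/b).
  assert (Hr : 0 < r) by (unfold r; apply Rdiv_lt_0_compat; auto).
  set (m := l*r^2+1-l).
  assert (Hm : 0 < m) by (unfold m; nra).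
  split.
  - assert (D : l*x+(1-l)*y = y*m) by (rewrite Ex, Ey; unfold m, r; field; lra).
    rewrite D.
    replace (x/(y*m)) with (r*r/m) by (rewrite Ex, Ey; unfold r; field; split; lra).
    replace (y/(y*m)) with (/m) by (field; split; lra).
    rewrite ln_Rinv by lra. rewrite ln_div by nra. rewrite ln_mult by lra.
    assert (Exy : x = y*(r*r)) by (rewrite Ex, Ey; unfold r; field; lra).
    rewrite Exy. unfold m. ring.
  - rewrite Ey at 1. unfold r. field. lra.
Qed.

Lemma Ub_le1 l : 0 < l < 1 -> Ub l <= 1.
Proof.
  intro Hl. destruct (Rle_dec l (1/2)).
  - apply (Ufacts l ltac:(lra)).
  - rewrite <- Ub_sym by lra. apply (Ufacts (1-l) ltac:(lra)).
Qed.

Lemma Ub_eta l : 0 < l < 1 -> 2 * eta l <= Ub l.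
Proof.
  intro Hl. destruct (Rle_dec l (1/2)).
  - apply (Ufacts l ltac:(lra)).
  - rewrite <- Ub_sym by lra. replace l with (1-(1-l)) at 1 by ring. apply (Ufacts (1-l) ltac:(lra)).
Qed.

Lemma lower_pos l x y : 0 < l < 1 -> 0 < y <= x -> Lb l * (hh x y / 2) <= Gp l x y.
Proof.
  intros Hl Hxy. destruct (Gp_pos l x y Hl ltac:(lra) ltac:(lra)) as [E1 E2].
  rewrite E1, E2.
  assert (0 < sqrt y) by (apply sqrt_lt_R0; lra).
  assert (1 <= sqrt x / sqrt y).
  {
    assert (sqrt y <= sqrt x) by (apply sqrt_le_1; lra).
    apply Rcomplements.Rle_div_r; lra. }
  generalize (lower_core l (sqrt x / sqrt y) Hl H0). intro H1.
  replace (Lb l * (y * (sqrt x / sqrt y - 1) ^ 2 / 2)) with (y * (Lb l * ((sqrt x / sqrt y - 1) ^ 2 / 2))) by (field; lra).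
  apply Rmult_le_compat_l; lra.
Qed.

Lemma lower_pt l x y : 0 < l < 1 -> 0 <= x -> 0 <= y -> Lb l * (hh x y / 2) <= Gp l x y.
Proof.
  intros Hl Hx Hy.
  destruct (Req_dec y 0) as [->|Hy0].
  { rewrite Gp_y0, hh_y0 by lra. generalize (Lb_le_eta l). nra. }
  destruct (Req_dec x 0) as [->|Hx0].
  { rewrite Gp_sym, hh_sym, Gp_y0, hh_y0 by lra. generalize (Lb_le_eta' l). nra. }
  destruct (Rle_dec y x).
  - apply lower_pos; lra.
  - rewrite Gp_sym, hh_sym, <- Lb_sym. apply lower_pos; lra.
Qed.

Lemma upper_pos l x y : 0 < l <= 1/2 -> 0 < x -> 0 < y -> Gp l x y <= Ub l * (hh x y / 2).
Proof.
  intros Hl Hx Hy. destruct (Gp_pos l x y ltac:(lra) Hx Hy) as [E1 E2].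
  rewrite E1, E2.
  destruct (Ufacts l Hl) as [K [F1 _]].
  assert (0 < sqrt y) by (apply sqrt_lt_R0; lra).
  assert (0 < sqrt x / sqrt y).
  { apply Rdiv_lt_0_compat; apply sqrt_lt_R0; lra. }
  generalize (upper_core l (Ub l) Hl K F1 (sqrt x / sqrt y) H0). intro H1.
  replace (Ub l * (y * (sqrt x / sqrt y - 1) ^ 2 / 2)) with (y * (Ub l * ((sqrt x / sqrt y - 1) ^ 2 / 2))) by (field; lra).
  apply Rmult_le_compat_l; lra.
Qed.

Lemma upper_pt l x y : 0 < l < 1 -> 0 <= x -> 0 <= y -> Gp l x y <= Ub l * (hh x y / 2).
Proof.
  intros Hl Hx Hy.
  destruct (Req_dec y 0) as [->|Hy0].
  { rewrite Gp_y0, hh_y0 by lra. generalize (Ub_eta l Hl). nra. }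
  destruct (Req_dec x 0) as [->|Hx0].
  { rewrite Gp_sym, hh_sym, Gp_y0, hh_y0 by lra. rewrite <- (Ub_sym l Hl). generalize (Ub_eta (1-l) ltac:(lra)). nra. }
  destruct (Rle_dec l (1/2)).
  - apply upper_pos; lra.
  - rewrite Gp_sym, hh_sym, <- (Ub_sym l Hl). apply upper_pos; lra.
Qed.

Lemma fr_le (s : list nat) f g : (forall i, In i s -> f i <= g i) ->
  fold_right Rplus 0 (map f s) <= fold_right Rplus 0 (map g s).
Proof.
  induction s as [|a s IH]; simpl; intros H; [lra|].
  apply Rplus_le_compat; auto.
Qed.

Lemma fr_lin (s : list nat) a b f g :
  fold_right Rplus 0 (map (fun i => a * f i + b * g i) s) =
  a * fold_right Rplus 0 (map f s) + b * fold_right Rplus 0 (map g s).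
Proof. induction s as [|x s IH]; simpl; [ring|]. rewrite IH. ring. Qed.

Lemma fr_scal (s : list nat) c f :
  fold_right Rplus 0 (map (fun i => c * f i) s) = c * fold_right Rplus 0 (map f s).
Proof. induction s as [|x s IH]; simpl; [ring|]. rewrite IH. ring. Qed.

Lemma fr_pos (s : list nat) f j : (forall i, In i s -> 0 <= f i) -> In j s -> 0 < f j ->
  0 < fold_right Rplus 0 (map f s).
Proof.
  induction s as [|a s IH]; simpl; intros H Hj Hf; [contradiction|].
  assert (0 <= fold_right Rplus 0 (map f s)).
  { clear - H. induction s as [|b s IH]; simpl; [lra|].
    assert (0 <= f b) by (apply H; simpl; auto).
    assert (0 <= fold_right Rplus 0 (map f s)) by (apply IH; intros i Hi; apply H; simpl in *; tauto).
    lra. }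
  destruct Hj as [<-|Hj].
  - lra.
  - assert (0 <= f a) by (apply H; auto).
    assert (0 < fold_right Rplus 0 (map f s)) by (apply IH; auto).
    lra.
Qed.

Lemma GJS_eq n l P Q : GJS n l P Q = sumR n (fun i => Gp l (P i) (Q i)).
Proof. unfold GJS, KL, sumR, mixture, Gp. rewrite fr_lin. reflexivity. Qed.

Lemma H_eq n P Q : Hellinger2 n P Q = 1/2 * sumR n (fun i => hh (P i) (Q i)).
Proof. reflexivity. Qed.

Lemma half_scal n c h : c * (1/2 * sumR n h) = sumR n (fun i => c * (h i / 2)).
Proof.
  unfold sumR. rewrite (map_ext (fun i => c*(h i/2)) (fun i => (c/2)*h i)) by (intro; field).
  rewrite fr_scal. field.
Qed.

Theorem theorem1 (n : nat) (P Q : nat -> R)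
  (hP : is_distribution n P) (hQ : is_distribution n Q)
  (hPQ : exists i, (i < n)%nat /\ P i <> Q i) :
  (forall lam : R, 0 < lam < 1 ->
     Lb lam * Hellinger2 n P Q <= GJS n lam P Q /\
     GJS n lam P Q <= Ub lam * Hellinger2 n P Q /\
     Ub lam * Hellinger2 n P Q <= Hellinger2 n P Q) /\
  (ln 2 <= JS n P Q / Hellinger2 n P Q /\ JS n P Q / Hellinger2 n P Q <= 1).
Proof.
  destruct hP as [hP _]. destruct hQ as [hQ _].
  assert (Hin : forall i, In i (seq 0 n) -> (i < n)%nat).
  { intros i Hi. apply in_seq in Hi. lia. }
  assert (Hpos : 0 < Hellinger2 n P Q).
  { rewrite H_eq. destruct hPQ as [j [Hj Hne]].
    assert (0 < sumR n (fun i => hh (P i) (Q i))); [|lra].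
    apply (fr_pos _ _ j).
    - intros i _. unfold hh. apply pow2_ge_0.
    - apply in_seq. lia.
    - unfold hh. assert (sqrt (P j) <> sqrt (Q j)).
      { intro E. apply Hne. apply sqrt_inj; auto. }
      assert (sqrt (P j) - sqrt (Q j) <> 0) by lra.
      replace ((sqrt (P j) - sqrt (Q j))^2) with ((sqrt (P j) - sqrt (Q j))*(sqrt (P j) - sqrt (Q j))) by ring.
      apply Rsqr_pos_lt. auto. }
  assert (Main : forall lam, 0 < lam < 1 ->
     Lb lam * Hellinger2 n P Q <= GJS n lam P Q /\
     GJS n lam P Q <= Ub lam * Hellinger2 n P Q /\
     Ub lam * Hellinger2 n P Q <= Hellinger2 n P Q).
  { intros lam Hl. rewrite GJS_eq, H_eq. split; [|split].
    - replace (Lb lam * (1/2 * sumR n (fun i => hh (P i) (Q i))))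
        with (sumR n (fun i => Lb lam * (hh (P i) (Q i) / 2)))
        by (symmetry; apply half_scal).
      apply fr_le. intros i Hi. apply lower_pt; auto.
    - replace (Ub lam * (1/2 * sumR n (fun i => hh (P i) (Q i))))
        with (sumR n (fun i => Ub lam * (hh (P i) (Q i) / 2)))
        by (symmetry; apply half_scal).
      apply fr_le. intros i Hi. apply upper_pt; auto.
    - rewrite <- H_eq. generalize (Ub_le1 lam Hl). nra. }
  split; [exact Main|].
  destruct (Main (1/2) ltac:(lra)) as [M1 [M2 _]].
  unfold JS.
  assert (HL : Lb (1/2) = ln 2).
  { unfold Lb, eta. replace (1 - 1/2) with (1/2) by field. rewrite Rmin_left by lra.
    rewrite ln_div by lra. rewrite ln_1. field. }
  assert (HU : Ub (1/2) = 1).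
  { unfold Ub. destruct (Req_EM_T (1/2) (1/2)); [reflexivity|contradiction]. }
  rewrite HL in M1. rewrite HU in M2.
  split.
  - apply Rcomplements.Rle_div_r; lra.
  - apply Rcomplements.Rle_div_l; lra.
Qed.
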